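(* Let $\Bbbk$ be a field of characteristic zero. Then $\mathrm{ch}\,\mathrm{OS}(\mathrm{Br}_n)^!_0=\mathrm{ch}\,\mathrm{VG}(\mathrm{Br}_n)^!_0=h_n$ for $n\ge1$; $\mathrm{ch}\,\mathrm{OS}(\mathrm{Br}_n)^!_1=h_2h_{n-2}$ for $n\ge2$; and $\mathrm{ch}\,\mathrm{VG}(\mathrm{Br}_n)^!_1=e_2h_{n-2}$ for $n\ge2$.
   Context: $\mathrm{OS}(\mathrm{Br}_n)=\bigwedge_\Bbbk(x_{ij}:1\le i<j\le n)/(x_{ij}x_{ik}-x_{ij}x_{jk}+x_{ik}x_{jk}:i<j<k)$ and $\mathrm{VG}(\mathrm{Br}_n)=\Bbbk[x_{ij}]/(x_{ij}x_{ik}-x_{ij}x_{jk}+x_{ik}x_{jk},\ x_{ij}^2)$, with $\mathfrak S_n$ acting by $\sigma(x_{ij})=x_{\sigma(i)\sigma(j)}$, where $x_{ji}=x_{ij}$ in $\mathrm{OS}$ and $x_{ji}=-x_{ij}$ in $\mathrm{VG}$. Koszul duals: writing the algebra as $\Bbbk\langle x_{ij}\rangle/I$, the dual is $\Bbbk\langle y_{ij}\rangle/(I_2^\perp)$ with $(y_ay_b,x_cx_d)=\delta_{ac}\delta_{bd}$ and the same action rule on $y_{ij}$. $\mathrm{ch}$ is the Frobenius characteristic map from $\Bbbk\mathfrak S_n$-modules to degree-$n$ symmetric functions; $h_k$, $e_k$ are complete homogeneous and elementary symmetric functions ($h_0=1$). *)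

(* Defs.v *)
From HB Require Import structures.
From mathcomp Require Import all_boot all_order all_algebra all_fingroup.
From mathcomp Require Import mpoly.

Set Implicit Arguments.
Unset Strict Implicit.
Unset Printing Implicit Defensive.

Import GRing.Theory.
Local Open Scope ring_scope.

Section KoszulDualBraid.

Variable F : fieldType.
Variable n : nat.

(* Generators x_ij (and dual generators y_ij), 1 <= i < j <= n, indexed by
   pairs (i, j) of 'I_n with i < j. *)
Definition gen := {p : 'I_n * 'I_n | (p.1 < p.2)%N}.

Definition spair (i j : 'I_n) : 'I_n * 'I_n :=
  if (i < j)%N then (i, j) else (j, i).

Lemma spairP (s : 'S_n) (a : gen) :
  ((spair (s (val a).1) (s (val a).2)).1 < (spair (s (val a).1) (s (val a).2)).2)%N.
Proof.
case: a => [[i j] /= lij]; rewrite /spair.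
have nij : (nat_of_ord (s i)) != s j.
  by apply/negP => /eqP/val_inj/perm_inj eij; move: lij; rewrite eij ltnn.
case: (ltnP (s i) (s j)) => h //=.
by rewrite ltn_neqAle h andbT eq_sym.
Qed.

(* sigma(y_ij) = +/- y_{sigma(i) sigma(j)}, rewritten with increasing indices *)
Definition gact (s : 'S_n) (a : gen) : gen := exist (fun p : 'I_n * 'I_n => (p.1 < p.2)%N) _ (spairP s a).

(* The sign: y_ji = y_ij (signed = false, OS case),
             y_ji = - y_ij (signed = true, VG case). *)
Definition gsign (signed : bool) (s : 'S_n) (a : gen) : F :=
  if signed && ~~ (s (val a).1 < s (val a).2)%N then -1 else 1.

(* Words of length d in the generators: basis of the degree-d part of the
   free (tensor) algebra. *)
Definition W (d : nat) := (d.-tuple gen)%type.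
Definition N (d : nat) := #|{: W d}|.

Definition tact (s : 'S_n) d (w : W d) : W d := map_tuple (gact s) w.
Definition tsign (signed : bool) (s : 'S_n) d (w : W d) : F :=
  \prod_(a <- w) gsign signed s a.

(* Matrix of the action of s on the degree-d part of the free algebra on
   the y's, acting on row vectors: row w is s.(y_w). *)
Definition actmx (signed : bool) (s : 'S_n) d : 'M[F]_(N d) :=
  \matrix_(i, j) (tsign signed s (enum_val i) *
                  ((tact s (enum_val i) == enum_val j)%:R)).

Definition w2 (a b : gen) : 'rV[F]_(N 2) :=
  \row_j ((enum_val j == [tuple a; b])%:R).

(* Arnold relations x_ij x_ik - x_ij x_jk + x_ik x_jk, i < j < k, indexed by
   triples (a, b, c) = ((i,j), (i,k), (j,k)). *)
Definition arnold_cond (t : gen * gen * gen) : bool :=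
  [&& (val t.1.1).1 == (val t.1.2).1,
      (val t.1.1).2 == (val t.2).1 &
      (val t.1.2).2 == (val t.2).2].

Definition arnold_rels : 'M[F]_(#|{: gen * gen * gen}|, N 2) :=
  \matrix_(k < #|{: gen * gen * gen}|)
    (let t := enum_val k in
     if arnold_cond t then w2 t.1.1 t.1.2 - w2 t.1.1 t.2 + w2 t.1.2 t.2
     else 0).

Definition square_rels : 'M[F]_(#|{: gen}|, N 2) :=
  \matrix_(k < #|{: gen}|) w2 (enum_val k) (enum_val k).

Definition anticomm_rels : 'M[F]_(#|{: gen * gen}|, N 2) :=
  \matrix_(k < #|{: gen * gen}|)
    (w2 (enum_val k).1 (enum_val k).2 + w2 (enum_val k).2 (enum_val k).1).
Definition comm_rels : 'M[F]_(#|{: gen * gen}|, N 2) :=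
  \matrix_(k < #|{: gen * gen}|)
    (w2 (enum_val k).1 (enum_val k).2 - w2 (enum_val k).2 (enum_val k).1).

(* Spanning sets (as rows) of I_2, the degree-2 part of the ideal I with
   OS(Br_n) = k<x>/I, resp. VG(Br_n) = k<x>/I. *)
Definition OS_rels := col_mx arnold_rels (col_mx anticomm_rels square_rels).
Definition VG_rels := col_mx arnold_rels (col_mx comm_rels square_rels).

Section Dual.
Variables (r : nat) (R : 'M[F]_(r, N 2)).

(* I_2^perp for the pairing (y_a y_b, x_c x_d) = delta_ac delta_bd:
   row space of perp. *)
Definition perp : 'M[F]_(N 2) := kermx R^T.

(* Degree-d part of the two-sided ideal generated by I_2^perp in the free
   algebra on the y's: spanned by u (x) phi (x) v, phi in I_2^perp, u, v words.
   Row indexed by (positions (p, p+1), context word w0, row of perp). *)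
Definition Jidx d := ('I_d * 'I_d * W d * 'I_(N 2))%type.

Definition Jmx d : 'M[F]_(#|{: Jidx d}|, N d) :=
  \matrix_(k < #|{: Jidx d}|, j < N d)
    (let: (pq, w0, rr) := (enum_val k : Jidx d) in
     let: (p, q) := pq in
     let w : W d := enum_val j in
     if ((q : nat) == p.+1) &&
        [forall t : 'I_d, ((t != p) && (t != q)) ==> (tnth w t == tnth w0 t)]
     then perp rr (enum_rank [tuple tnth w p; tnth w q])
     else 0).

(* Character of s on the degree-d part A^!_d = T_d / J_d of the Koszul dual:
   trace on T_d minus trace of the restriction to the (stable) subspace J_d. *)
Definition kdual_char (signed : bool) d (s : 'S_n) : F :=
  let B := row_base (Jmx d) in
  \tr (actmx signed s d) - \tr (B *m actmx signed s d *m pinvmx B).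

End Dual.

(* Symmetric functions of degree n, realized faithfully in n variables. *)
Definition psum (k : nat) : {mpoly F[n]} := \sum_(i < n) 'X_i ^+ k.
Definition pcyc (s : 'S_n) : {mpoly F[n]} :=
  \prod_(C in porbits s) psum #|C|.
Definition hcomp (k : nat) : {mpoly F[n]} :=
  \sum_(m : 'X_{1..n < k.+1} | mdeg m == k) 'X_[m].
Definition elem (k : nat) : {mpoly F[n]} := mesym n F k.

Definition frob (chi : 'S_n -> F) : {mpoly F[n]} :=
  (n`!%:R)^-1 *: \sum_(s : 'S_n) chi s *: pcyc s.

End KoszulDualBraid.

Definition ch_OS_dual (F : fieldType) (n d : nat) : {mpoly F[n]} :=
  frob (kdual_char (@OS_rels F n) false d).
Definition ch_VG_dual (F : fieldType) (n d : nat) : {mpoly F[n]} :=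
  frob (kdual_char (@VG_rels F n) true d).

(* Main.v *)
Set Warnings "-notation-overridden,-ambiguous-paths,-notation-incompatible-prefix,-deprecated".
Require Import Defs.
From HB Require Import structures.
From mathcomp Require Import all_boot all_order all_algebra all_fingroup.
From mathcomp Require Import mpoly zify.
Import GRing.Theory.
Local Open Scope ring_scope.

Set Implicit Arguments.
Unset Strict Implicit.
Unset Printing Implicit Defensive.
Section TupleAction.
Variables (n : nat) (K : finType).

Definition tpa (f : n.-tuple K) (s : 'S_n) : n.-tuple K :=
  [tuple tnth f (s^-1%g i) | i < n].

Lemma tpa1 : tpa^~ 1%g =1 id.
Proof. by move=> f; apply: eq_from_tnth => i; rewrite tnth_mktuple invg1 perm1. Qed.

Lemma tpaM f : act_morph tpa f.
Proof.
move=> a b; apply: eq_from_tnth => i.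
by rewrite !tnth_mktuple invMg permM.
Qed.

Definition tpact := TotalAction tpa1 tpaM.

Lemma tpa_perm f s : perm_eq (tpa f s) f.
Proof. by apply/tuple_permP; exists s^-1%g. Qed.

Lemma tpa_permP (f g : n.-tuple K) : perm_eq g f -> exists s, tpa f s = g.
Proof.
case/tuple_permP=> p gE; exists p^-1%g; apply: val_inj => /=.
by rewrite gE /= invgK.
Qed.
End TupleAction.
Section GL.
Variables (F : fieldType) (V : lmodType F) (n : nat) (X : finType).
Variable to : {action 'S_n &-> X}.
Variables (I : eqType) (c : X -> I) (Wt : I -> V) (L : seq I).
Hypothesis c_inv : forall x s, c (to x s) = c x.
Hypothesis c_orb : forall x y, c x = c y -> exists s, to x s = y.
Hypothesis L_uniq : uniq L.
Hypothesis L_mem : forall i, (i \in L) = [exists x, c x == i].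

Definition stab x := [set s : 'S_n | to x s == x].

Lemma stabE x : stab x = ([set: 'S_n] :&: 'C[x | to])%g.
Proof. by apply/setP=> s; rewrite in_set in_setI in_setT /=; apply/eqP/astab1P. Qed.

Lemma sum_stab_orbit x0 :
  (\sum_(x | c x == c x0) #|stab x|)%N = n`!.
Proof.
have orbE : forall x, (c x == c x0) = (x \in orbit to [set: 'S_n] x0).
  move=> x; apply/eqP/idP.
    by move/esym/c_orb=> [s <-]; apply/orbitP; exists s; rewrite ?inE.
  by case/orbitP=> s _ <-; rewrite c_inv.
have cs : forall x, x \in orbit to [set: 'S_n] x0 ->
    (#|stab x| * #|orbit to [set: 'S_n] x0|)%N = n`!.
  move=> x xO; rewrite stabE mulnC.
  have /eqP <- : orbit to [set: 'S_n] x == orbit to [set: 'S_n] x0 by rewrite orbit_eq_mem.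
  by rewrite (card_orbit_stab _ [group of [set: 'S_n]] x) cardsT card_Sn.
have pos : (0 < #|orbit to [set: 'S_n] x0|)%N.
  by apply/card_gt0P; exists x0; apply: orbit_refl.
apply/eqP; rewrite -(eqn_pmul2r pos) (eq_bigl _ _ orbE) big_distrl /=.
rewrite (eq_bigr (fun _ => n`!)); last by move=> x /cs.
by rewrite sum_nat_const mulnC.
Qed.

Lemma GL : \sum_x #|stab x|%:R *: Wt (c x) = n`!%:R *: \sum_(i <- L) Wt i.
Proof.
have cL : forall x, c x \in L by move=> x; rewrite L_mem; apply/existsP; exists x.
transitivity (\sum_x \sum_(i <- L) if c x == i then #|stab x|%:R *: Wt i else 0).
  apply: eq_bigr => x _; rewrite -big_mkcond -big_filter.
  rewrite (eq_filter (a2 := pred1 (c x))); last by move=> j; rewrite /= eq_sym.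
  by rewrite filter_pred1_uniq ?cL // big_seq1.
rewrite exchange_big /= scaler_sumr big_seq_cond [RHS]big_seq_cond.
apply: eq_bigr => i /andP[iL _]; rewrite -big_mkcond /=.
have := iL; rewrite L_mem => /existsP[x0 /eqP cx0].
rewrite -scaler_suml -natr_sum.
rewrite (eq_bigl (fun x => c x == c x0)); last by move=> x; rewrite cx0 eq_sym.
by rewrite sum_stab_orbit.
Qed.
End GL.
Section Pcyc.
Variables (F : fieldType) (n : nat).

Definition wt (f : seq 'I_n) : {mpoly F[n]} := \prod_(t <- f) 'X_t.
Definition fixedb (s : 'S_n) (f : n.-tuple 'I_n) := [forall t, tnth f (s t) == tnth f t].

Lemma fixedb_const s f : fixedb s f -> forall t u, u \in porbit s t -> tnth f u = tnth f t.
Proof.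
move=> /forallP fx t u /porbitP[i ->]; elim: i => [|i IH]; first by rewrite expg0 perm1.
by rewrite expgSr permM (eqP (fx _)).
Qed.

Lemma wt_tuple (f : n.-tuple 'I_n) : wt f = \prod_(t < n) 'X_(tnth f t).
Proof. by rewrite /wt big_tuple. Qed.

Lemma pcycE (j0 : 'I_n) s : pcyc F s = \sum_(f | fixedb s f) wt f.
Proof.
rewrite /pcyc /psum (big_distr_big_dep j0) /=.
pose repr (C : {set 'I_n}) := odflt j0 [pick x in C].
have mem_repr : forall x (C : {set 'I_n}), x \in C -> repr C \in C.
  by move=> x C xC; rewrite /repr; case: pickP => //= /(_ x); rewrite xC.
pose h (f : n.-tuple 'I_n) : {ffun {set 'I_n} -> 'I_n} :=
  [ffun C => if C \in porbits s then tnth f (repr C) else j0].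
pose h' (g : {ffun {set 'I_n} -> 'I_n}) := [tuple g (porbit s t) | t < n].
have reprE : forall C, C \in porbits s -> porbit s (repr C) = C.
  move=> C /imsetP[x _ ->]; apply/eqP; rewrite eq_porbit_mem.
  by apply: (mem_repr x); apply: porbit_id.
rewrite (reindex_onto h h').
  have hP : forall f, h f \in pfamily j0 (porbits s) (fun _ : {set 'I_n} => predT).
    move=> f; apply/pfamilyP; split => //; apply/supportP => C CP.
    by rewrite /h ffunE (negbTE CP).
  have hh'E : forall f t, tnth (h' (h f)) t = tnth f (repr (porbit s t)).
    by move=> f t; rewrite tnth_mktuple /h ffunE imset_f.
  have predE : forall f, (h' (h f) == f) = fixedb s f.
    move=> f; apply/eqP/forallP => [fE t | fx].
      have E1 := congr1 (fun g => tnth g t) fE.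
      have E2 := congr1 (fun g => tnth g (s t)) fE.
      rewrite /= !hh'E in E1 E2.
      have P : porbit s (s t) = porbit s t by rewrite -(porbit_perm s 1 t) expg1.
      by rewrite P in E2; rewrite -E2 E1.
    apply: eq_from_tnth => t; rewrite hh'E.
    by apply: (fixedb_const (introT forallP fx)); apply: (mem_repr t); apply: porbit_id.
  apply: eq_big => f; first by rewrite hP predE.
  rewrite hP predE /= => fx; rewrite wt_tuple.
  rewrite (partition_big_imset (porbit s)) /=.
  apply: eq_big => // C CP.
  have [x _ Cx] := imsetP CP.
  rewrite /h ffunE CP.
  rewrite (eq_bigr (fun _ => 'X_(tnth f (repr C)))); last first.
    move=> t /eqP tC; congr 'X_(_); symmetry; apply: (fixedb_const fx).
    by rewrite -tC; apply: (mem_repr t); apply: porbit_id.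
  have E : forall t, (porbit s t == C) = (t \in C) by move=> t; rewrite Cx eq_porbit_mem.
  rewrite prodr_const; congr (_ ^+ _); apply: eq_card => t.
  exact: (esym (E t)).
move=> g /pfamilyP[/supportP gs _]; apply/ffunP => C; rewrite /h ffunE.
case: ifP => CP; first by rewrite tnth_mktuple reprE.
by rewrite gs // CP.
Qed.
End Pcyc.

Section HS.
Variables (F : fieldType) (n : nat).

Definition leo : rel 'I_n := fun i j => (i <= j)%N.
Lemma leo_total : total leo. Proof. by move=> i j; apply: leq_total. Qed.
Lemma leo_tr : transitive leo. Proof. by move=> i j k; apply: leq_trans. Qed.
Lemma leo_asym : antisymmetric leo.
Proof. by move=> i j /andP[h1 h2]; apply: val_inj; apply/eqP; rewrite eqn_leq; apply/andP. Qed.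

Definition cnt (h : seq 'I_n) : 'X_{1..n} := [multinom count_mem i h | i < n].

Lemma cnt_cons x h : cnt (x :: h) = (U_(x) + cnt h)%MM.
Proof. by apply/mnmP => i; rewrite mnmDE !mnmE. Qed.

Lemma cnt_nil : cnt [::] = 0%MM.
Proof. by apply/mnmP => i; rewrite !mnmE. Qed.

Lemma wt_cnt h : wt F h = 'X_[cnt h].
Proof.
elim: h => [|x h IH]; first by rewrite /wt big_nil cnt_nil mpolyX0.
by rewrite /wt big_cons -/(wt F h) IH cnt_cons mpolyXD.
Qed.

Lemma mdeg_cnt h : mdeg (cnt h) = size h.
Proof.
elim: h => [|x h IH]; first by rewrite cnt_nil mdeg0.
by rewrite cnt_cons mdegD mdeg1 IH.
Qed.

Lemma cnt_perm h1 h2 : cnt h1 = cnt h2 -> perm_eq h1 h2.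
Proof.
move=> E; apply/allP => x _ /=; have := congr1 (fun m : 'X_{1..n} => m x) E.
by rewrite !mnmE => ->.
Qed.

Lemma sorted_cnt_inj h1 h2 : sorted leo h1 -> sorted leo h2 -> cnt h1 = cnt h2 -> h1 = h2.
Proof. by move=> s1 s2 /cnt_perm; apply: (sorted_eq leo_tr leo_asym). Qed.

Lemma perm_cnt h1 h2 : perm_eq h1 h2 -> cnt h1 = cnt h2.
Proof. by move/seq.permP => E; apply/mnmP => i; rewrite !mnmE E. Qed.

Lemma cnt_exists (m : 'X_{1..n}) :
  exists2 s, sorted leo s & cnt s = m.
Proof.
exists (sort leo (flatten [seq nseq (m i) i | i <- enum 'I_n])).
  exact: (sort_sorted leo_total).
apply/mnmP => j; rewrite mnmE count_sort count_flatten -map_comp sumnE big_map big_enum /=.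
rewrite (bigD1 j) //= count_nseq /= eqxx mul1n big1 ?addn0 // => i /negbTE ij.
by rewrite count_nseq /= ij.
Qed.

Lemma hcompE k : hcomp F n k = \sum_(h : k.-tuple 'I_n | sorted leo h) wt F h.
Proof.
have bP : forall h : k.-tuple 'I_n, (mdeg (cnt h) < k.+1)%N.
  by move=> h; rewrite mdeg_cnt size_tuple.
pose cb (h : k.-tuple 'I_n) : 'X_{1..n < k.+1} := BMultinom (bP h).
rewrite (partition_big cb (fun m : 'X_{1..n < k.+1} => mdeg m == k)); last first.
  by move=> h _; rewrite /cb /= mdeg_cnt size_tuple.
apply: eq_bigr => m /eqP mk.
have [s ss sm] := cnt_exists m.
have sz : size s == k by rewrite -mdeg_cnt sm mk.
pose h0 : k.-tuple 'I_n := Tuple sz.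
rewrite (big_pred1 h0) /=.
  by rewrite wt_cnt /= sm.
move=> h /=; apply/andP/eqP => [[hs /eqP hm]|->].
  apply: val_inj => /=; apply: sorted_cnt_inj => //.
  by rewrite sm -hm.
split => //; apply/eqP; apply: val_inj => /=; exact: sm.
Qed.

Definition Lk k : seq (seq 'I_n) :=
  map (@tval k 'I_n) (enum [pred h : k.-tuple 'I_n | sorted leo h]).

Lemma Lk_uniq k : uniq (Lk k).
Proof. rewrite map_inj_uniq ?enum_uniq // => x y; exact: val_inj. Qed.

Lemma mem_Lk k s : (s \in Lk k) = sorted leo s && (size s == k).
Proof.
apply/mapP/andP => [[h] | [ss sz]].
  by rewrite mem_enum => hs ->; rewrite size_tuple.
by exists (Tuple sz); rewrite // mem_enum.
Qed.

Lemma sum_Lk k : \sum_(s <- Lk k) wt F s = hcomp F n k.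
Proof. by rewrite hcompE big_map big_enum. Qed.
End HS.
Section Char.
Variables (F : fieldType) (n : nat).

Lemma tr_actmx signed s d :
  \tr (actmx F signed s d) = \sum_(w : W n d) tsign F signed s w * (tact s w == w)%:R.
Proof.
rewrite /mxtrace; under eq_bigr do rewrite mxE.
rewrite -(big_enum_val (A := {: W n d}) (fun w => tsign F signed s w * (tact s w == w)%:R)).
by apply: eq_bigl => w; rewrite inE.
Qed.

Lemma kdual_rank0 r (R : 'M[F]_(r, N n 2)) signed d s :
  \rank (Jmx R d) = 0%N -> kdual_char R signed d s = \tr (actmx F signed s d).
Proof.
move=> r0; rewrite /kdual_char; rewrite [X in _ - X]/mxtrace big1 ?subr0 // => i _.
by case: i => i hi; exfalso; move: hi; rewrite r0.
Qed.

Lemma Jmx0_rank r (R : 'M[F]_(r, N n 2)) : \rank (Jmx R 0) = 0%N.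
Proof.
apply/eqP; rewrite -leqn0; apply: leq_trans (rank_leq_row _) _.
by rewrite !card_prod card_ord.
Qed.

Lemma Jmx1_rank r (R : 'M[F]_(r, N n 2)) : \rank (Jmx R 1) = 0%N.
Proof.
rewrite (_ : Jmx R 1 = 0) ?mxrank0 //; apply/matrixP => k j; rewrite !mxE.
case: (enum_val k) => [[[p q] w0] rr] /=.
by rewrite ltn_eqF // (leq_trans (ltn_ord q)).
Qed.

Lemma kdual0 r (R : 'M[F]_(r, N n 2)) signed s : kdual_char R signed 0 s = 1.
Proof.
rewrite kdual_rank0 ?Jmx0_rank // tr_actmx (big_pred1 [tuple]).
  by rewrite /tsign /= big_nil mul1r.
by move=> w; apply/esym/eqP/tuple0.
Qed.

Lemma kdual1 r (R : 'M[F]_(r, N n 2)) signed s :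
  kdual_char R signed 1 s = \sum_(a : gen n) gsign F signed s a * (Defs.gact s a == a)%:R.
Proof.
rewrite kdual_rank0 ?Jmx1_rank // tr_actmx.
rewrite (reindex (fun a : gen n => [tuple a])) /=; last first.
  exists (fun w : W n 1 => thead w) => [a _|w _]; first by rewrite theadE.
  by case: w => [[|x [|? ?]] //] ?; apply: val_inj.
apply: eq_bigr => a _; rewrite /tsign big_seq1; congr (_ * _%:R).
by rewrite -val_eqE /= eqseq_cons andbT.
Qed.
End Char.
Section D0.
Variables (F : fieldType) (n : nat).
Hypothesis charF0 : [pchar F] =i pred0.

Lemma fact_neq0 : (n`!%:R : F) != 0.
Proof. by move/pcharf0P: charF0 => ->; rewrite -lt0n fact_gt0. Qed.

Lemma fixedbE s (f : n.-tuple 'I_n) : fixedb s f = (tpa f s == f).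
Proof.
apply/forallP/eqP => [fx | fE t].
  apply: eq_from_tnth => t; rewrite tnth_mktuple.
  by have /eqP := fx (s^-1%g t); rewrite permKV => ->.
have := congr1 (fun g => tnth g (s t)) fE; rewrite /= tnth_mktuple permK => ->.
by [].
Qed.

Lemma frob_expand (chi : 'S_n -> F) (j0 : 'I_n) :
  frob chi = (n`!%:R)^-1 *: \sum_s \sum_(f : n.-tuple 'I_n | fixedb s f) chi s *: wt F f.
Proof.
rewrite /frob; congr (_ *: _); apply: eq_bigr => s _.
by rewrite (pcycE F j0) scaler_sumr.
Qed.

Lemma swap_stab (G : 'S_n -> n.-tuple 'I_n -> {mpoly F[n]}) :
  \sum_s \sum_(f : n.-tuple 'I_n | fixedb s f) G s f =
  \sum_(f : n.-tuple 'I_n) \sum_(s in stab (tpact n 'I_n) f) G s f.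
Proof.
under eq_bigr do rewrite big_mkcond.
rewrite exchange_big; apply: eq_bigr => f _; rewrite [RHS]big_mkcond.
by apply: eq_bigr => s _; rewrite inE fixedbE.
Qed.

Lemma frob_triv (n0 : (0 < n)%N) : frob (fun _ : 'S_n => (1 : F)) = hcomp F n n.
Proof.
rewrite (frob_expand _ (Ordinal n0)) swap_stab.
under eq_bigr do rewrite -scaler_suml sumr_const.
pose c (f : n.-tuple 'I_n) := sort (@leo n) f.
have -> : \sum_(f : n.-tuple 'I_n) (1 *+ #|stab (tpact n 'I_n) f|) *: wt F f
   = \sum_(f : n.-tuple 'I_n) #|stab (tpact n 'I_n) f|%:R *: wt F (c f).
  apply: eq_bigr => f _; congr (_ *: _); rewrite /c /wt.
  by apply: perm_big; rewrite perm_sym perm_sort.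
rewrite (@GL F _ n _ (tpact n 'I_n) _ c (@wt F n) (Lk n n)).
- by rewrite sum_Lk scalerA mulVf ?scale1r // fact_neq0.
- by move=> f s; apply/perm_sortP; [exact: leo_total|exact: leo_tr|exact: leo_asym|exact: tpa_perm].
- move=> f g /perm_sortP E; apply: tpa_permP; rewrite perm_sym.
  by apply: E; [exact: leo_total|exact: leo_tr|exact: leo_asym].
- exact: Lk_uniq.
move=> i; rewrite mem_Lk; apply/andP/existsP => [[ss sz]|[f /eqP <-]].
  by exists (Tuple sz); rewrite /c /= sorted_sort //; exact: leo_tr.
by rewrite size_sort size_tuple sort_sorted //; exact: leo_total.
Qed.
End D0.
Section D1a.
Variables (n : nat).
Local Notation X1 := (gen n * n.-tuple 'I_n)%type.

Lemma spairC (i j : 'I_n) : i != j -> spair i j = spair j i.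
Proof.
move=> ij; rewrite /spair; case: ltngtP => // E.
by move: ij; rewrite -val_eqE /= E eqxx.
Qed.

Lemma gact1 (a : gen n) : Defs.gact 1%g a = a.
Proof.
apply: val_inj; case: a => [[i j] /= lij]; by rewrite /Defs.gact /= !perm1 /spair /= lij.
Qed.

Lemma gactM (a : gen n) (s t : 'S_n) : Defs.gact (s * t)%g a = Defs.gact t (Defs.gact s a).
Proof.
apply: val_inj; case: a => [[i j] /= lij]; rewrite /Defs.gact /= !permM.
have ij : i != j by rewrite -val_eqE /= neq_ltn lij.
have sij : s i != s j by rewrite (inj_eq perm_inj).
move: sij; move: (s i) (s j) => u v uv.
rewrite [spair u v]/spair; case: ifP => _ //=.
by rewrite spairC // (inj_eq perm_inj).
Qed.

Definition pa (x : X1) (s : 'S_n) : X1 := (Defs.gact s x.1, tpa x.2 s).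
Lemma pa1 : pa^~ 1%g =1 id.
Proof. by case=> a f; rewrite /pa gact1 tpa1. Qed.
Lemma paM x : act_morph pa x.
Proof. by case: x => a f s t; rewrite /pa /= gactM tpaM. Qed.
Definition paact := TotalAction pa1 paM.

Definition inA (a : gen n) (t : 'I_n) := (t == (val a).1) || (t == (val a).2).

Lemma inA_gact (s : 'S_n) (a : gen n) (t : 'I_n) : inA (Defs.gact s a) t = inA a (s^-1%g t).
Proof.
rewrite /inA /Defs.gact /= /spair.
have E : forall u, (t == s u) = (s^-1%g t == u).
  by move=> u; apply/eqP/eqP => [->|<-]; rewrite ?permK ?permKV.
by case: ifP => _ /=; rewrite !E // orbC.
Qed.

Definition enc (x : X1) : n.-tuple ('I_n * bool) :=
  [tuple (tnth x.2 t, inA x.1 t) | t < n].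

Lemma enc_act x s : enc (pa x s) = tpa (enc x) s.
Proof.
by apply: eq_from_tnth => t; rewrite !tnth_mktuple /= inA_gact.
Qed.

Lemma inA_inj (a b : gen n) : inA a =1 inA b -> a = b.
Proof.
case: a b => [[i j] /= lij] [[k l] /= lkl] E; apply: val_inj => /=.
have := E i; have := E j; have := E k; have := E l.
rewrite /inA /= !eqxx /= ?orbT -!val_eqE /= => H1 H2 H3 H4.
have [ik jl] : (i = k :> nat) /\ (j = l :> nat) by lia.
by congr pair; apply: val_inj.
Qed.

Lemma enc_inj : injective enc.
Proof.
case=> a f [b g] E.
have Ef : f = g.
  apply: eq_from_tnth => t; have := congr1 (fun e => tnth e t) E.
  by rewrite !tnth_mktuple => -[].
have Ea : a = b.
  apply: inA_inj => t; have := congr1 (fun e => tnth e t) E.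
  by rewrite !tnth_mktuple => -[].
by rewrite Ef Ea.
Qed.

Lemma perm_split (u v : seq ('I_n * bool)) :
  perm_eq (map fst (filter snd u)) (map fst (filter snd v)) ->
  perm_eq (map fst (filter (predC snd) u)) (map fst (filter (predC snd) v)) ->
  perm_eq u v.
Proof.
have E : forall w : seq ('I_n * bool), perm_eq w
   (map (fun z => (z, true)) (map fst (filter snd w)) ++
    map (fun z => (z, false)) (map fst (filter (predC snd) w))).
  move=> w; rewrite -!map_comp.
  rewrite (@map_id_in _ _ (filter snd w)); last by case=> z [] //; rewrite mem_filter.
  rewrite (@map_id_in _ _ (filter (predC snd) w)); last by case=> z [] //; rewrite mem_filter.
  by rewrite perm_sym perm_filterC.
move=> P1 P2; apply: perm_trans (E u) _; rewrite perm_sym; apply: perm_trans (E v) _.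
by rewrite perm_sym; apply: perm_cat; apply: perm_map.
Qed.

Definition c1 (x : X1) : seq 'I_n * seq 'I_n :=
  (sort (@leo n) (map fst (filter snd (enc x))),
   sort (@leo n) (map fst (filter (predC snd) (enc x)))).

Lemma sortE (s1 s2 : seq 'I_n) : (sort (@leo n) s1 == sort (@leo n) s2) = perm_eq s1 s2.
Proof.
have T := @leo_total n; have Tr := @leo_tr n; have A := @leo_asym n.
by apply/eqP/idP => [/(perm_sortP T Tr A)|/(perm_sortP T Tr A)].
Qed.

Lemma c1_inv x s : c1 (pa x s) = c1 x.
Proof.
have P := tpa_perm (enc x) s.
by rewrite /c1 enc_act; congr pair; apply/eqP; rewrite sortE perm_map // perm_filter.
Qed.

Lemma c1_orb x y : c1 x = c1 y -> exists s, pa x s = y.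
Proof.
case=> /eqP E1 /eqP E2; rewrite sortE in E1; rewrite sortE in E2.
have P : perm_eq (enc y) (enc x) by rewrite perm_sym; apply: perm_split.
have [s Es] := tpa_permP P.
by exists s; apply: enc_inj; rewrite enc_act.
Qed.

Lemma enc_seq x : (enc x : seq _) = map (fun t => (tnth x.2 t, inA x.1 t)) (enum 'I_n).
Proof. by rewrite /enc /= enumT unlock. Qed.

Lemma encT x : map fst (filter snd (enc x)) = map (tnth x.2) (filter (inA x.1) (enum 'I_n)).
Proof. by rewrite enc_seq filter_map -map_comp. Qed.

Lemma encF x : map fst (filter (predC snd) (enc x)) =
  map (tnth x.2) (filter (predC (inA x.1)) (enum 'I_n)).
Proof. by rewrite enc_seq filter_map -map_comp. Qed.

Lemma filter_inA a : perm_eq (filter (inA a) (enum 'I_n)) [:: (val a).1; (val a).2].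
Proof.
apply: uniq_perm; first by rewrite filter_uniq ?enum_uniq.
  case: a => [[i j] /= lij]; rewrite /= inE andbT -val_eqE /=.
  by rewrite neq_ltn lij.
by move=> t; rewrite mem_filter mem_enum andbT !inE.
Qed.

Lemma c1_1 x : perm_eq (map fst (filter snd (enc x)))
                 [:: tnth x.2 (val x.1).1; tnth x.2 (val x.1).2].
Proof. by rewrite encT; apply: (perm_map (tnth x.2) (filter_inA x.1)). Qed.

Lemma size_c1 x : size (c1 x).1 = 2%N /\ size (c1 x).2 = (n - 2)%N.
Proof.
rewrite /c1 /= !size_sort (perm_size (c1_1 x)); split => //.
rewrite encF size_map size_filter.
have := count_predC (inA x.1) (enum 'I_n).
rewrite -size_filter (perm_size (filter_inA x.1)) size_enum_ord /=.
by move=> H; lia.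
Qed.

Lemma uniq_c1 x : uniq (c1 x).1 = (tnth x.2 (val x.1).1 != tnth x.2 (val x.1).2).
Proof. by rewrite /c1 /= sort_uniq (perm_uniq (c1_1 x)) /= inE andbT. Qed.

Lemma wt_c1 (F : fieldType) (x : X1) : wt F x.2 = wt F (c1 x).1 * wt F (c1 x).2.
Proof.
rewrite /wt /c1 /= -big_cat /=; apply: perm_big.
rewrite perm_sym; apply: perm_trans (perm_cat _ _) _; [ | | ].
- by rewrite perm_sort.
- by rewrite perm_sort.
rewrite encT encF -map_cat -[in X in perm_eq _ X](map_tnth_enum x.2) perm_map //.
by rewrite perm_filterC.
Qed.

Lemma c1_sorted x : sorted (@leo n) (c1 x).1 /\ sorted (@leo n) (c1 x).2.
Proof. by split; apply: sort_sorted; exact: leo_total. Qed.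

Lemma c1_surj (n2 : (1 < n)%N) (nu mu : seq 'I_n) :
  sorted (@leo n) nu -> size nu = 2%N -> sorted (@leo n) mu -> size mu = (n - 2)%N ->
  exists x, c1 x = (nu, mu).
Proof.
move=> snu znu smu zmu.
have h0 : (0 < n)%N by apply: ltn_trans n2.
pose o0 : 'I_n := Ordinal h0. pose o1 : 'I_n := Ordinal n2.
have lo : ((o0, o1).1 < (o0, o1).2)%N by [].
pose a0 : gen n := exist _ (o0, o1) lo.
have sz : size (nu ++ mu) == n by rewrite size_cat znu zmu; apply/eqP; lia.
pose f0 : n.-tuple 'I_n := Tuple sz.
exists (a0, f0); congr pair.
  apply/eqP; rewrite -(sorted_sort (@leo_tr n) snu) sortE (perm_trans (c1_1 _)) //.
  rewrite /= !(tnth_nth o0) /= !nth_cat znu /=.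
  by case: (nu) znu => [|y [|z [|? ?]]].
rewrite encF -(sorted_sort (@leo_tr n) smu); congr sort.
rewrite (eq_map (tnth_nth o0 f0)) /=.
have -> : filter (predC (inA a0)) (enum 'I_n) = filter (fun t : 'I_n => (1 < t)%N) (enum 'I_n).
  by apply: eq_filter => t; rewrite /inA /= -!val_eqE /=; case: t => [[|[|t]] ?].
have -> : map (fun i : 'I_n => nth o0 (nu ++ mu) i) (filter (fun t : 'I_n => (1 < t)%N) (enum 'I_n)) =
   map (nth o0 (nu ++ mu)) (filter (fun i => 1 < i)%N (map val (enum 'I_n))).
  by rewrite filter_map -map_comp.
rewrite val_enum_ord.
have -> : iota 0 n = iota 0 2 ++ iota 2 (n - 2) by rewrite -iotaD subnKC.
rewrite filter_cat /= (iotaDl 2 0) filter_map.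
rewrite (@eq_filter _ _ predT) ?filter_predT; last by [].
rewrite -map_comp (eq_map (g := nth o0 mu)); last first.
  by move=> i /=; rewrite nth_cat znu ltnNge leq_addr /= addKn.
by rewrite -zmu; exact: (mkseq_nth o0 mu).
Qed.

End D1a.

Section D1b.
Variables (F : fieldType) (n : nat).
Hypothesis charF0 : [pchar F] =i pred0.
Local Notation X1 := (gen n * n.-tuple 'I_n)%type.

Lemma stab_pa (x : X1) s :
  (s \in stab (paact n) x) = (Defs.gact s x.1 == x.1) && fixedb s x.2.
Proof. by case: x => a f; rewrite inE /= xpair_eqE fixedbE. Qed.

Lemma sign_sum b (x : X1) :
  \sum_(s in stab (paact n) x) gsign F b s x.1 =
  (#|stab (paact n) x| * (if b then uniq (c1 x).1 else true))%:R.
Proof.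
case: x => a f; case: b; last first.
  by rewrite muln1 -sumr_const; apply: eq_bigr => s _; rewrite /gsign.
rewrite uniq_c1 /=; case: a => [[i j] lij] /=.
set a := exist _ (i, j) lij.
have ij : i != j by rewrite -val_eqE /= neq_ltn lij.
have gE : forall s, s \in stab (paact n) (a, f) ->
    (s i = i /\ s j = j /\ (s i < s j)%N) \/ (s i = j /\ s j = i /\ ~~ (s i < s j)%N).
  move=> s; rewrite stab_pa /= => /andP[/eqP gs _].
  have := congr1 val gs; rewrite /Defs.gact /= /spair.
  by case: ifP => h [E1 E2]; [left|right]; rewrite ?h.
case: (eqVneq (tnth f i) (tnth f j)) => E /=; last first.
  rewrite muln1 -sumr_const; apply: eq_bigr => s sS.
  have := sS; rewrite stab_pa => /andP[_ /forallP fx].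
  rewrite /gsign /=; case: (gE s sS) => [[_ [_ ->]] //|[si [_ _]]].
  by have := eqP (fx i); rewrite si => /esym/eqP; rewrite (negbTE E).
rewrite muln0.
set S := (X in X = _).
pose tau := tperm i j.
have paT : pa (a, f) tau = (a, f).
  rewrite /pa /=; congr pair.
    by apply: val_inj; rewrite /Defs.gact /= tpermL tpermR /spair ltnNge (ltnW lij).
  apply/eqP; rewrite -fixedbE; apply/forallP => t.
  by case: tpermP => [->|->|] //; rewrite E.
have Hmem : forall s, (tau * s)%g \in stab (paact n) (a, f) = (s \in stab (paact n) (a, f)).
  by move=> s; rewrite !inE /= paM paT.
have Hsg : forall s, gsign F true (tau * s)%g a = - gsign F true s a.
  move=> s; rewrite /gsign /= !permM tpermL tpermR.
  have : s i != s j by rewrite (inj_eq perm_inj).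
  rewrite -val_eqE /=; case: ltngtP => //= _ _; by rewrite opprK.
have SE : S = - S.
  rewrite {1}/S (reindex_inj (mulgI tau)) /=.
  under eq_bigl do rewrite Hmem.
  by rewrite -sumrN; apply: eq_bigr => s _; rewrite Hsg.
have : S *+ 2 = 0 by rewrite mulr2n {1}SE addNr.
move=> H; have : (2%:R : F) * S == 0 by rewrite mulr_natl H.
rewrite mulf_eq0 => /orP[|/eqP //].
by move/pcharf0P: charF0 => ->.
Qed.
End D1b.

Section D1c.
Variables (F : fieldType) (n : nat).
Hypothesis charF0 : [pchar F] =i pred0.
Local Notation X1 := (gen n * n.-tuple 'I_n)%type.

Lemma elem2E : \sum_(p <- Lk n 2) (uniq p)%:R *: wt F p = elem F n 2.
Proof.
rewrite /elem mesym_tupleE big_map big_enum /= [RHS]big_mkcond [LHS]big_mkcond /=.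
apply: eq_bigr => h _; rewrite unfold_in /tmono ltn_sorted_uniq_leq sorted_map.
rewrite (map_inj_uniq val_inj).
by case: (uniq h); case: (sorted _ _); rewrite ?scale1r ?scale0r.
Qed.

Lemma frob_d1 (n2 : (1 < n)%N) b :
  frob (fun s => \sum_(a : gen n) gsign F b s a * (Defs.gact s a == a)%:R) =
  (if b then elem F n 2 else hcomp F n 2) * hcomp F n (n - 2).
Proof.
have h0 : (0 < n)%N by apply: ltn_trans n2.
rewrite (frob_expand _ (Ordinal h0)).
have stepA : forall s : 'S_n,
   \sum_(f : n.-tuple 'I_n | fixedb s f)
      (\sum_(a : gen n) gsign F b s a * (Defs.gact s a == a)%:R) *: wt F f =
   \sum_(x : X1) if s \in stab (paact n) x then gsign F b s x.1 *: wt F x.2 else 0.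
  move=> s; under [RHS]eq_bigr do rewrite stab_pa.
  rewrite -(pair_bigA _ (fun a f => if (Defs.gact s a == a) && fixedb s f
                                then gsign F b s a *: wt F f else 0)) /=.
  rewrite big_mkcond /= exchange_big /=; apply: eq_bigr => f _.
  case: (fixedb s f); last by rewrite big1 // => a _; rewrite andbF.
  rewrite scaler_suml; apply: eq_bigr => a _; rewrite andbT.
  by case: (_ == _); rewrite ?mulr1 ?mulr0 ?scale0r.
under eq_bigr do rewrite stepA.
clear stepA.
rewrite exchange_big /=.
under eq_bigr do rewrite -big_mkcond -scaler_suml sign_sum //.
pose Wt (p : seq 'I_n * seq 'I_n) : {mpoly F[n]} :=
  (if b then uniq p.1 else true)%:R *: (wt F p.1 * wt F p.2).
have -> : \sum_(x : X1) (#|stab (paact n) x| * (if b then uniq (c1 x).1 else true))%:R *: wt F x.2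
    = \sum_(x : X1) #|stab (paact n) x|%:R *: Wt (c1 x).
  by apply: eq_bigr => x _; rewrite natrM -scalerA (wt_c1 F x).
pose L1 := [seq (p1, p2) | p1 <- Lk n 2, p2 <- Lk n (n - 2)].
rewrite (@GL F _ n _ (paact n) _ (@c1 n) Wt L1).
- rewrite scalerA mulVf ?scale1r ?fact_neq0 //.
  rewrite /L1 big_allpairs /Wt; clear Wt.
  case: b; last first.
    rewrite -sum_Lk big_distrl /=; apply: eq_bigr => p1 _.
    by rewrite -sum_Lk big_distrr /=; apply: eq_bigr => p2 _; rewrite scale1r.
  rewrite -elem2E -sum_Lk big_distrl /=; apply: eq_bigr => p1 _.
  by rewrite big_distrr /=; apply: eq_bigr => p2 _; rewrite scalerAl.
- exact: c1_inv.
- exact: c1_orb.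
- rewrite allpairs_uniq ?Lk_uniq //.
  by move=> [? ?] [? ?] _ _ /= [-> ->].
move=> [p1 p2]; apply/allpairsP/existsP => [[[q1 q2] /= [q1L q2L [-> ->]]]|[x /eqP cx]].
  move: q1L q2L; rewrite !mem_Lk => /andP[s1 /eqP z1] /andP[s2 /eqP z2].
  by have [x <-] := c1_surj n2 s1 z1 s2 z2; exists x.
have [z1 z2] := size_c1 x; have [s1 s2] := c1_sorted x.
rewrite cx /= in z1 z2 s1 s2.
by exists (p1, p2); rewrite /= !mem_Lk s1 s2 z1 z2 !eqxx.
Qed.
End D1c.

Lemma frob_ext (F : fieldType) (n : nat) (chi1 chi2 : 'S_n -> F) :
  chi1 =1 chi2 -> frob chi1 = frob chi2.
Proof. by move=> E; rewrite /frob; congr (_ *: _); apply: eq_bigr => s _; rewrite E. Qed.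

Theorem propositionB1 (F : fieldType) (charF0 : [pchar F] =i pred0) (n : nat) :
  ((1 <= n)%N ->
     ch_OS_dual F n 0 = hcomp F n n /\ ch_VG_dual F n 0 = hcomp F n n) /\
  ((2 <= n)%N ->
     ch_OS_dual F n 1 = hcomp F n 2 * hcomp F n (n - 2) /\
     ch_VG_dual F n 1 = elem F n 2 * hcomp F n (n - 2)).
Proof.
split => [n1 | n2].
  by split; rewrite /ch_OS_dual /ch_VG_dual (frob_ext (fun s => kdual0 _ _ s)) frob_triv.
split; rewrite /ch_OS_dual /ch_VG_dual (frob_ext (fun s => kdual1 _ _ s)).
  by rewrite (frob_d1 charF0 n2 false).
by rewrite (frob_d1 charF0 n2 true).
Qed.
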